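(* Let $\varphi$ be a timelike ruled surface of type $M^1_+$ in $\mathbb{R}^3_1$ and let the ruled surface $\varphi^*$ of type $M^2_+$ be a Mannheim offset of $\varphi$. Let $\varphi_{h^*}$ and $\varphi_{a^*}$ be the trajectory ruled surfaces generated by the vectors $\vec h^*$ and $\vec a^*$ of $\varphi^*$. Then (a) $\varphi_{h^*}$ is a Bertrand offset of $\varphi$; (b) $\varphi_{a^*}$ is a Mannheim offset of $\varphi$.
   Context: Work in Minkowski 3-space $\mathbb{R}^3_1$ with $\langle x,y\rangle=-x_1y_1+x_2y_2+x_3y_3$, $\|x\|=\sqrt{|\langle x,x\rangle|}$, and Lorentzian cross product $x\times y=(x_2y_3-x_3y_2,\,x_1y_3-x_3y_1,\,x_2y_1-x_1y_2)$. A ruled surface is $\varphi(s,v)=\vec c(s)+v\vec q(s)$ with $\vec q$ a unit non-null vector field, $d\vec q/ds$ non-null, and $\vec c$ the striction curve ($\langle d\vec q/ds,d\vec c/ds\rangle=0$). Its Frenet frame $\{\vec q,\vec h,\vec a\}$ has central normal $\vec h=\frac{d\vec q/ds}{\|d\vec q/ds\|}$ and asymptotic normal $\vec a=\frac{(d\vec q/ds)\times\vec q}{\|d\vec q/ds\|}$. Type $M^1_+$: $\vec q$ and $\vec h$ spacelike (a timelike surface); type $M^2_+$: $\vec h$ timelike, $\vec q$ and $d\vec q/ds$ spacelike (a spacelike surface). A ruled surface $\varphi^*(s,v)=\vec c^*(s)+v\vec q^*(s)$ with Frenet frame $\{\vec q^*,\vec h^*,\vec a^*\}$ is a Mannheim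 offset of a ruled surface $\varphi$ if there is a one-to-one correspondence between their rulings such that the asymptotic normal of $\varphi$ is (up to sign) the central normal of $\varphi^*$, i.e. $\vec h^*=\vec a$; it is a Bertrand offset of $\varphi$ if there is a one-to-one correspondence between their rulings such that their central normals coincide (up to sign). Here $\vec c^*=\vec c+R\vec a$ and, with $\theta$ the angle between $\vec q$ and $\vec q^*$, $\vec q^*=\cos\theta\,\vec q+\sin\theta\,\vec h$, $\vec a^*=\sin\theta\,\vec q-\cos\theta\,\vec h$. The trajectory ruled surfaces are $\varphi_{h^*}(s,v)=\vec c^*(s)+v\vec h^*(s)$ and $\varphi_{a^*}(s,v)=\vec c^*(s)+v\vec a^*(s)$. *)

(* Defs.v *)
From Stdlib Require Import Reals.
From Coquelicot Require Import Coquelicot.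
Open Scope R_scope.

Definition V3 : Type := (R * R * R)%type.
Definition x1 (x : V3) : R := fst (fst x).
Definition x2 (x : V3) : R := snd (fst x).
Definition x3 (x : V3) : R := snd x.

Definition lip (x y : V3) : R := - x1 x * x1 y + x2 x * x2 y + x3 x * x3 y.
Definition lnorm (x : V3) : R := sqrt (Rabs (lip x x)).
Definition lcross (x y : V3) : V3 :=
  (x2 x * x3 y - x3 x * x2 y,
   x1 x * x3 y - x3 x * x1 y,
   x2 x * x1 y - x1 x * x2 y).
Definition vscale (k : R) (x : V3) : V3 := (k * x1 x, k * x2 x, k * x3 x).
Definition vopp (x : V3) : V3 := (- x1 x, - x2 x, - x3 x).

Definition spacelike (x : V3) : Prop := lip x x > 0.
Definition timelike (x : V3) : Prop := lip x x < 0.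
Definition nonnull (x : V3) : Prop := lip x x <> 0.

Definition vD (f : R -> V3) (s : R) : V3 :=
  (Derive (fun t => x1 (f t)) s,
   Derive (fun t => x2 (f t)) s,
   Derive (fun t => x3 (f t)) s).

Definition smooth_on (a b : R) (f : R -> V3) : Prop :=
  forall (n : nat) (s : R), a < s < b ->
    ex_derive_n (fun t => x1 (f t)) n s /\
    ex_derive_n (fun t => x2 (f t)) n s /\
    ex_derive_n (fun t => x3 (f t)) n s.

Definition central_normal (q : R -> V3) (s : R) : V3 :=
  vscale (/ lnorm (vD q s)) (vD q s).
Definition asymptotic_normal (q : R -> V3) (s : R) : V3 :=
  vscale (/ lnorm (vD q s)) (lcross (vD q s) (q s)).

(** A ruled surface phi(s,v) = c(s) + v q(s), s in (a,b), given by the pair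
    (c, q): q unit non-null, dq/ds non-null, c the striction curve. *)
Definition ruled_surface_on (a b : R) (c q : R -> V3) : Prop :=
  smooth_on a b c /\ smooth_on a b q /\
  forall s, a < s < b ->
    Rabs (lip (q s) (q s)) = 1 /\
    nonnull (vD q s) /\
    lip (vD q s) (vD c s) = 0.

Definition type_M1p (a b : R) (c q : R -> V3) : Prop :=
  ruled_surface_on a b c q /\
  forall s, a < s < b -> spacelike (q s) /\ spacelike (central_normal q s).

Definition type_M2p (a b : R) (c q : R -> V3) : Prop :=
  ruled_surface_on a b c q /\
  forall s, a < s < b -> spacelike (q s) /\ timelike (central_normal q s).

(** Offsets, the rulings corresponding through the common parameter s.
    A surface is given as (base curve, ruling field); the notions only
    depend on the ruling fields.  Non-nullness of the derivative of the
    offset's ruling field is included so that its central normal is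
    defined. *)
Definition mannheim_offset (a b : R) (phi phis : (R -> V3) * (R -> V3)) : Prop :=
  forall s, a < s < b ->
    nonnull (vD (snd phis) s) /\
    (central_normal (snd phis) s = asymptotic_normal (snd phi) s \/
     central_normal (snd phis) s = vopp (asymptotic_normal (snd phi) s)).

Definition bertrand_offset (a b : R) (phi phis : (R -> V3) * (R -> V3)) : Prop :=
  forall s, a < s < b ->
    nonnull (vD (snd phis) s) /\
    (central_normal (snd phis) s = central_normal (snd phi) s \/
     central_normal (snd phis) s = vopp (central_normal (snd phi) s)).

(* Main.v *)
Require Import Defs.
From Stdlib Require Import Reals Lra Psatz.
From Coquelicot Require Import Coquelicot.
Open Scope R_scope.

Lemma vext (x y : V3) : x1 x = x1 y -> x2 x = x2 y -> x3 x = x3 y -> x = y.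
Proof. destruct x as [[p r] t], y as [[p' r'] t']; unfold x1,x2,x3; simpl; intros -> -> ->; reflexivity. Qed.

Lemma lip_cross_self (x y : V3) : lip (lcross x y) (lcross x y) =
  - (lip x x * lip y y - lip x y ^ 2).
Proof. unfold lip, lcross, x1, x2, x3; simpl; ring. Qed.
Lemma lip_cross_l (x y : V3) : lip (lcross x y) x = 0.
Proof. unfold lip, lcross, x1, x2, x3; simpl; ring. Qed.
Lemma lip_cross_r (x y : V3) : lip (lcross x y) y = 0.
Proof. unfold lip, lcross, x1, x2, x3; simpl; ring. Qed.
Lemma dcross (x y z : V3) : lcross x (lcross y z) =
  vscale (-1) ((lip x z) * x1 y - lip x y * x1 z, lip x z * x2 y - lip x y * x2 z,
       lip x z * x3 y - lip x y * x3 z).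
Proof. apply vext; unfold lip, lcross, vscale, x1, x2, x3; simpl; ring. Qed.

Lemma lip_sym x y : lip x y = lip y x.
Proof. unfold lip; ring. Qed.

Lemma parallel (w q D : V3) :
  lip q q = 1 -> lip q D = 0 -> lip D D <> 0 ->
  lip w q = 0 -> lip w (lcross D q) = 0 ->
  w = vscale (lip w D / lip D D) D.
Proof.
  intros Hq HqD Hk Hwq Hwn.
  set (E := lcross w D).
  assert (HE : x1 E = 0 /\ x2 E = 0 /\ x3 E = 0).
  { pose proof (dcross w q (lcross D q)) as H0.
    pose proof (dcross q D q) as H1.
    rewrite Hq, HqD in H1. rewrite Hwn, Hwq in H0.
    assert (H2 : lcross w (lcross q (lcross D q)) = vopp E).
    { rewrite H1. unfold E; apply vext; unfold lcross, vscale, vopp, x1, x2, x3; simpl; ring. }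
    rewrite H2 in H0. unfold vopp, vscale, x1, x2, x3 in H0; simpl in H0.
    injection H0; intros. unfold E, lcross, x1, x2, x3 in *; simpl in *; repeat split; nra. }
  destruct HE as [e1 [e2 e3]].
  pose proof (dcross D w D) as H3.
  assert (H4 : lcross D (lcross w D) = (0,0,0)).
  { fold E. unfold lcross at 1. unfold x1, x2, x3 in *. rewrite e1, e2, e3. apply vext; unfold x1, x2, x3; simpl; ring. }
  rewrite H4 in H3. unfold vscale in H3; simpl in H3.
  injection H3; intros K3 K2 K1.
  rewrite (lip_sym D w) in K1, K2, K3.
  cbn [x1 x2 x3 fst snd] in K1, K2, K3.
  apply vext; unfold vscale at 1; cbn [x1 x2 x3 fst snd];
  apply (Rmult_eq_reg_l (lip D D)); auto.
  - replace (lip D D * (lip w D / lip D D * x1 D)) with (lip w D * x1 D) by (field; auto); lra.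
  - replace (lip D D * (lip w D / lip D D * x2 D)) with (lip w D * x2 D) by (field; auto); lra.
  - replace (lip D D * (lip w D / lip D D * x3 D)) with (lip w D * x3 D) by (field; auto); lra.
Qed.

Definition vex (u : R -> V3) (s : R) : Prop :=
  ex_derive (fun t => x1 (u t)) s /\ ex_derive (fun t => x2 (u t)) s /\
  ex_derive (fun t => x3 (u t)) s.

Lemma isd_mult (f g : R -> R) x df dg : is_derive f x df -> is_derive g x dg ->
  is_derive (fun t => f t * g t) x (df * g x + f x * dg).
Proof. intros H1 H2. pose proof (is_derive_mult f g x df dg H1 H2 Rmult_comm) as H. exact H. Qed.
Lemma isd_plus (f g : R -> R) x df dg : is_derive f x df -> is_derive g x dg ->
  is_derive (fun t => f t + g t) x (df + dg).
Proof. intros H1 H2. pose proof (is_derive_plus f g x df dg H1 H2) as H. exact H. Qed.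
Lemma isd_opp (f : R -> R) x df : is_derive f x df ->
  is_derive (fun t => - f t) x (- df).
Proof. intros H1. pose proof (is_derive_opp f x df H1) as H. exact H. Qed.

Lemma lip_is_derive (u v : R -> V3) s : vex u s -> vex v s ->
  is_derive (fun t => lip (u t) (v t)) s (lip (vD u s) (v s) + lip (u s) (vD v s)).
Proof.
  intros [u1 [u2 u3]] [v1 [v2 v3]].
  set (f1 := fun t => x1 (u t)) in *. set (f2 := fun t => x2 (u t)) in *.
  set (f3 := fun t => x3 (u t)) in *. set (g1 := fun t => x1 (v t)) in *.
  set (g2 := fun t => x2 (v t)) in *. set (g3 := fun t => x3 (v t)) in *.
  apply is_derive_ext with (f := fun t => - (f1 t * g1 t) + f2 t * g2 t + f3 t * g3 t).
  { intros; unfold lip, f1, f2, f3, g1, g2, g3; rewrite Ropp_mult_distr_l; reflexivity. }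
  replace (lip (vD u s) (v s) + lip (u s) (vD v s)) with
    (- (Derive f1 s * g1 s + f1 s * Derive g1 s) + (Derive f2 s * g2 s + f2 s * Derive g2 s)
     + (Derive f3 s * g3 s + f3 s * Derive g3 s)).
  2:{ unfold lip, vD, f1, f2, f3, g1, g2, g3; cbn [x1 x2 x3 fst snd]; ring. }
  apply Derive_correct in u1, u2, u3, v1, v2, v3.
  apply (isd_plus (fun t => - (f1 t * g1 t) + f2 t * g2 t) (fun t => f3 t * g3 t)).
  apply (isd_plus (fun t => - (f1 t * g1 t)) (fun t => f2 t * g2 t)).
  apply (isd_opp (fun t => f1 t * g1 t)).
  all: apply isd_mult; auto.
Qed.

Lemma loc_int (a b s : R) (P : R -> Prop) : a < s < b ->
  (forall t, a < t < b -> P t) -> locally s P.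
Proof.
  intros Hs HP.
  assert (He : 0 < Rmin (s - a) (b - s)) by (apply Rmin_pos; lra).
  exists (mkposreal _ He). intros y Hy. apply HP.
  change (Rabs (y - s) < Rmin (s - a) (b - s)) in Hy.
  pose proof (Rmin_l (s-a) (b-s)); pose proof (Rmin_r (s-a) (b-s)).
  apply Rabs_def2 in Hy. lra.
Qed.

Lemma const_deriv (a b C s : R) (u v : R -> V3) :
  (forall t, a < t < b -> lip (u t) (v t) = C) -> a < s < b -> vex u s -> vex v s ->
  lip (vD u s) (v s) + lip (u s) (vD v s) = 0.
Proof.
  intros HC Hs Hu Hv.
  pose proof (lip_is_derive u v s Hu Hv) as H1.
  assert (H2 : is_derive (fun t => lip (u t) (v t)) s 0).
  { apply is_derive_ext_loc with (f := fun _ => C).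
    - apply (loc_int a b s); auto. intros t Ht; rewrite HC; auto.
    - pose proof (is_derive_const (K := R_AbsRing) C s) as H; exact H. }
  apply is_derive_unique in H1. apply is_derive_unique in H2. congruence.
Qed.

Lemma smooth_vex a b u s : smooth_on a b u -> a < s < b -> vex u s /\ vex (vD u) s.
Proof.
  intros H Hs. destruct (H 1%nat s Hs) as [a1 [a2 a3]].
  destruct (H 2%nat s Hs) as [b1 [b2 b3]].
  split; split; [exact a1| split; [exact a2|exact a3] | exact b1 | split; [exact b2|exact b3]].
Qed.

Lemma ex_mult (f g : R -> R) x : ex_derive f x -> ex_derive g x -> ex_derive (fun t => f t * g t) x.
Proof. intros [df H1] [dg H2]. exists (df * g x + f x * dg). apply isd_mult; auto. Qed.
Lemma ex_minus (f g : R -> R) x : ex_derive f x -> ex_derive g x -> ex_derive (fun t => f t - g t) x.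
Proof. intros [df H1] [dg H2]. exists (df + - dg).
  apply (isd_plus f (fun t => - g t)); auto. apply isd_opp; auto. Qed.

Lemma vex_cross (u v : R -> V3) s : vex u s -> vex v s -> vex (fun t => lcross (u t) (v t)) s.
Proof.
  intros [u1 [u2 u3]] [v1 [v2 v3]].
  split; [|split]; unfold lcross; cbn [x1 x2 x3 fst snd];
  apply ex_minus; apply ex_mult; auto.
Qed.

Lemma ex_invnorm (D : R -> V3) s : vex D s -> lip (D s) (D s) <> 0 ->
  ex_derive (fun t => / lnorm (D t)) s.
Proof.
  intros HD Hk.
  pose proof (lip_is_derive D D s HD HD) as H1.
  set (g := fun t => lip (D t) (D t)) in *.
  pose proof (is_derive_Rabs g s _ H1 Hk) as H2.
  assert (Hp : 0 < Rabs (g s)) by (apply Rabs_pos_lt; auto).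
  pose proof (is_derive_sqrt (fun t => Rabs (g t)) s _ H2 Hp) as H3.
  assert (Hn : sqrt (Rabs (g s)) <> 0) by (apply Rgt_not_eq, sqrt_lt_R0; auto).
  pose proof (is_derive_inv (fun t => sqrt (Rabs (g t))) s _ H3 Hn) as H4.
  eexists. exact H4.
Qed.

Lemma vex_normal (D w : R -> V3) s : vex D s -> vex w s -> lip (D s) (D s) <> 0 ->
  vex (fun t => vscale (/ lnorm (D t)) (w t)) s.
Proof.
  intros HD [w1 [w2 w3]] Hk. pose proof (ex_invnorm D s HD Hk) as Hi.
  split; [|split]; unfold vscale; cbn [x1 x2 x3 fst snd]; apply ex_mult; auto.
Qed.

Lemma lip_scale c d x y : lip (vscale c x) (vscale d y) = c * d * lip x y.
Proof. unfold lip, vscale, x1, x2, x3; simpl; ring. Qed.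
Lemma lip_opp_l x y : lip (vopp x) y = - lip x y.
Proof. unfold lip, vopp, x1, x2, x3; simpl; ring. Qed.

Lemma lnorm_sq x : lnorm x * lnorm x = Rabs (lip x x).
Proof. unfold lnorm. apply sqrt_sqrt. apply Rabs_pos. Qed.
Lemma lnorm_pos x : lip x x <> 0 -> 0 < lnorm x.
Proof. intro H. unfold lnorm. apply sqrt_lt_R0. apply Rabs_pos_lt; auto. Qed.

Lemma frame_at a b c q t : ruled_surface_on a b c q ->
  (forall t, a < t < b -> spacelike (q t)) -> a < t < b ->
  lip (q t) (q t) = 1 /\ lip (q t) (vD q t) = 0 /\ lip (vD q t) (vD q t) <> 0.
Proof.
  intros HR Hsp Ht. destruct HR as [Hc [Hq HR]].
  assert (H1 : forall t, a < t < b -> lip (q t) (q t) = 1).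
  { intros t0 Ht0. destruct (HR t0 Ht0) as [Ha _]. specialize (Hsp t0 Ht0).
    unfold spacelike in Hsp. rewrite Rabs_pos_eq in Ha; lra. }
  destruct (smooth_vex a b q t Hq Ht) as [Hv _].
  pose proof (const_deriv a b 1 t q q H1 Ht Hv Hv) as H2.
  rewrite (lip_sym (vD q t)) in H2.
  destruct (HR t Ht) as [_ [Hn _]].
  repeat split; auto. lra.
Qed.

Lemma lip_an q t : lip (q t) (q t) = 1 -> lip (q t) (vD q t) = 0 ->
  lip (vD q t) (vD q t) <> 0 ->
  lip (asymptotic_normal q t) (asymptotic_normal q t) =
    - lip (vD q t) (vD q t) / Rabs (lip (vD q t) (vD q t)).
Proof.
  intros H1 H2 H3. unfold asymptotic_normal. rewrite lip_scale, lip_cross_self.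
  rewrite H1, (lip_sym (vD q t) (q t)), H2. rewrite <- lnorm_sq.
  pose proof (lnorm_pos _ H3). field. lra.
Qed.

Lemma lip_cn q t : lip (vD q t) (vD q t) <> 0 ->
  lip (central_normal q t) (central_normal q t) =
    lip (vD q t) (vD q t) / Rabs (lip (vD q t) (vD q t)).
Proof.
  intros H3. unfold central_normal. rewrite lip_scale. rewrite <- lnorm_sq.
  pose proof (lnorm_pos _ H3). field. lra.
Qed.

Lemma lip_scale_l c x y : lip (vscale c x) y = c * lip x y.
Proof. unfold lip, vscale, x1, x2, x3; simpl; ring. Qed.
Lemma lip_scale_r c x y : lip x (vscale c y) = c * lip x y.
Proof. unfold lip, vscale, x1, x2, x3; simpl; ring. Qed.

Lemma lip_an_q q t : lip (asymptotic_normal q t) (q t) = 0.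
Proof. unfold asymptotic_normal. rewrite lip_scale_l, lip_cross_r. ring. Qed.
Lemma lip_an_D q t : lip (asymptotic_normal q t) (vD q t) = 0.
Proof. unfold asymptotic_normal. rewrite lip_scale_l, lip_cross_l. ring. Qed.
Lemma lip_cn_an q t : lip (central_normal q t) (asymptotic_normal q t) = 0.
Proof. unfold asymptotic_normal, central_normal. rewrite lip_scale, lip_sym, lip_cross_l. ring. Qed.
Lemma lip_w_an w q t : lip w (asymptotic_normal q t) = / lnorm (vD q t) * lip w (lcross (vD q t) (q t)).
Proof. unfold asymptotic_normal. apply lip_scale_r. Qed.

Lemma scale_normalize (l : R) (D : V3) : l <> 0 -> lip D D <> 0 ->
  vscale (/ lnorm (vscale l D)) (vscale l D) = vscale (/ lnorm D) D \/
  vscale (/ lnorm (vscale l D)) (vscale l D) = vopp (vscale (/ lnorm D) D).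
Proof.
  intros Hl Hk.
  assert (HN : lnorm (vscale l D) = Rabs l * lnorm D).
  { unfold lnorm. rewrite lip_scale, Rabs_mult.
    rewrite (Rabs_pos_eq (l * l)) by nra.
    rewrite sqrt_mult_alt by nra. rewrite <- Rsqr_def, sqrt_Rsqr_abs. reflexivity. }
  pose proof (lnorm_pos _ Hk) as Hn.
  rewrite HN. destruct (Rlt_or_le 0 l) as [Hp|Hp].
  - left. rewrite Rabs_pos_eq by lra. apply vext; unfold vscale, x1, x2, x3; simpl; field; lra.
  - right. rewrite Rabs_left by lra. apply vext; unfold vscale, vopp, x1, x2, x3; simpl; field; lra.
Qed.

Lemma cn_eq (f : R -> V3) s l D : vD f s = vscale l D -> l <> 0 -> lip D D <> 0 ->
  central_normal f s = vscale (/ lnorm D) D \/ central_normal f s = vopp (vscale (/ lnorm D) D).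
Proof. intros H Hl Hk. unfold central_normal. rewrite H. apply scale_normalize; auto. Qed.

Lemma lip_opp_r x y : lip x (vopp y) = - lip x y.
Proof. unfold lip, vopp, x1, x2, x3; simpl; ring. Qed.
Lemma vopp_vopp x : vopp (vopp x) = x.
Proof. apply vext; unfold vopp, x1, x2, x3; simpl; ring. Qed.

Lemma sign_neg k : k <> 0 -> k / Rabs k < 0 -> k < 0.
Proof. intros Hk H. destruct (Rlt_or_le k 0); auto.
  rewrite Rabs_pos_eq in H by lra. assert (k > 0) by lra.
  replace (k / k) with 1 in H by (field; lra). lra. Qed.

Theorem corollary6p3 (a b : R) (c q cs qs : R -> V3) :
  a < b ->
  type_M1p a b c q ->
  type_M2p a b cs qs ->
  mannheim_offset a b (c, q) (cs, qs) ->
  (forall s, a < s < b -> nonnull (vD (asymptotic_normal qs) s)) ->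
  bertrand_offset a b (c, q) (cs, central_normal qs) /\
  mannheim_offset a b (c, q) (cs, asymptotic_normal qs).
Proof.
  intros Hab [HR1 H1] [HR2 H2] HM Hna.
  assert (Sq : forall t, a < t < b -> spacelike (q t)) by (intros t Ht; apply (H1 t Ht)).
  assert (Sqs : forall t, a < t < b -> spacelike (qs t)) by (intros t Ht; apply (H2 t Ht)).
  pose proof (fun t Ht => frame_at a b c q t HR1 Sq Ht) as Fq.
  pose proof (fun t Ht => frame_at a b cs qs t HR2 Sqs Ht) as Fs.
  assert (Ks : forall t, a < t < b -> lip (vD qs t) (vD qs t) < 0).
  { intros t Ht. destruct (Fs t Ht) as [_ [_ Hk]]. apply sign_neg; auto.
    rewrite <- lip_cn; auto. apply (H2 t Ht). }
  set (hs := central_normal qs). set (as_ := asymptotic_normal qs).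
  set (aq := asymptotic_normal q).
  assert (HMt : forall t, a < t < b -> hs t = aq t \/ hs t = vopp (aq t)).
  { intros t Ht. apply (HM t Ht). }
  assert (C1 : forall t, a < t < b -> lip (hs t) (hs t) = -1).
  { intros t Ht. unfold hs. rewrite lip_cn by (apply Fs; auto).
    specialize (Ks t Ht). rewrite Rabs_left by lra. field. lra. }
  assert (C2 : forall t, a < t < b -> lip (hs t) (q t) = 0).
  { intros t Ht. destruct (HMt t Ht) as [E|E]; rewrite E; unfold aq.
    - apply lip_an_q.
    - rewrite lip_opp_l, lip_an_q; ring. }
  assert (C3 : forall t, a < t < b -> lip (as_ t) (as_ t) = 1).
  { intros t Ht. destruct (Fs t Ht) as [F1 [F2 F3]]. unfold as_. rewrite lip_an by auto.
    specialize (Ks t Ht). rewrite Rabs_left by lra. field. lra. }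
  assert (C4 : forall t, a < t < b -> lip (as_ t) (qs t) = 0).
  { intros t Ht. apply lip_an_q. }
  assert (C5 : forall t, a < t < b -> lip (hs t) (as_ t) = 0).
  { intros t Ht. apply lip_cn_an. }
  assert (MAIN : forall s, a < s < b ->
    nonnull (vD hs s) /\
    (central_normal hs s = central_normal q s \/ central_normal hs s = vopp (central_normal q s)) /\
    (central_normal as_ s = aq s \/ central_normal as_ s = vopp (aq s))).
  { intros s Hs.
    destruct (Fq s Hs) as [Q1 [Q2 Q3]]. destruct (Fs s Hs) as [S1 [S2 S3]].
    destruct (smooth_vex a b q s (proj1 (proj2 HR1)) Hs) as [Vq VDq].
    destruct (smooth_vex a b qs s (proj1 (proj2 HR2)) Hs) as [Vqs VDqs].
    assert (Vhs : vex hs s) by exact (vex_normal (vD qs) (vD qs) s VDqs VDqs S3).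
    assert (Vas : vex as_ s).
    { exact (vex_normal (vD qs) (fun t => lcross (vD qs t) (qs t)) s VDqs
               (vex_cross (vD qs) qs s VDqs Vqs) S3). }
    set (w := vD hs s). set (z := vD as_ s).
    pose proof (const_deriv a b (-1) s hs hs C1 Hs Vhs Vhs) as E1.
    pose proof (const_deriv a b 0 s hs q C2 Hs Vhs Vq) as E2.
    pose proof (const_deriv a b 1 s as_ as_ C3 Hs Vas Vas) as E3.
    pose proof (const_deriv a b 0 s as_ qs C4 Hs Vas Vqs) as E4.
    pose proof (const_deriv a b 0 s hs as_ C5 Hs Vhs Vas) as E5.
    fold w z in E1, E2, E3, E4, E5.
    rewrite (lip_sym (hs s) w) in E1. rewrite (lip_sym (as_ s) z) in E3.
    assert (Wa : lip w (aq s) = 0).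
    { destruct (HMt s Hs) as [E|E]; rewrite E in E1.
      - lra.
      - rewrite lip_opp_r in E1. lra. }
    assert (Wq : lip w (q s) = 0).
    { destruct (HMt s Hs) as [E|E]; rewrite E in E2; unfold aq in E2.
      - rewrite lip_an_D in E2. lra.
      - rewrite lip_opp_l, lip_an_D in E2. lra. }
    assert (Zq : lip z (qs s) = 0).
    { unfold as_ in E4. rewrite lip_an_D in E4. lra. }
    pose proof (lnorm_pos _ Q3) as Nq. pose proof (lnorm_pos _ S3) as Ns.
    assert (Wn : lip w (lcross (vD q s) (q s)) = 0).
    { unfold aq in Wa. rewrite lip_w_an in Wa.
      apply Rmult_integral in Wa. destruct Wa as [W|W]; auto.
      exfalso. apply (Rinv_neq_0_compat (lnorm (vD q s))); lra. }
    assert (Zn : lip z (lcross (vD qs s) (qs s)) = 0).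
    { assert (E3' : lip z (as_ s) = 0) by lra. unfold as_ in E3'. rewrite lip_w_an in E3'.
      apply Rmult_integral in E3'. destruct E3' as [W|W]; auto.
      exfalso. apply (Rinv_neq_0_compat (lnorm (vD qs s))); lra. }
    pose proof (parallel w (q s) (vD q s) Q1 Q2 Q3 Wq Wn) as Pw.
    pose proof (parallel z (qs s) (vD qs s) S1 S2 S3 Zq Zn) as Pz.
    set (lam := lip w (vD q s) / lip (vD q s) (vD q s)) in Pw.
    set (mu := lip z (vD qs s) / lip (vD qs s) (vD qs s)) in Pz.
    assert (Hmu : mu <> 0).
    { intro M0. apply (Hna s Hs). fold as_ z. rewrite Pz, M0, lip_scale. ring. }
    assert (Hlam : lam <> 0).
    { intro L0. rewrite Pw, L0, lip_scale_l in E5. rewrite Pz, lip_scale_r in E5.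
      unfold hs, central_normal in E5. rewrite lip_scale_l in E5.
      assert (mu * (/ lnorm (vD qs s) * lip (vD qs s) (vD qs s)) = 0) by lra.
      apply Rmult_integral in H. destruct H as [H|H]; [auto|].
      apply Rmult_integral in H. destruct H as [H|H]; [|auto].
      apply (Rinv_neq_0_compat (lnorm (vD qs s))); lra. }
    split; [|split].
    - unfold nonnull. fold w. rewrite Pw, lip_scale.
      intro H. apply Rmult_integral in H. destruct H as [H|H]; auto.
      apply Rmult_integral in H. destruct H; auto.
    - exact (cn_eq hs s lam (vD q s) Pw Hlam Q3).
    - destruct (cn_eq as_ s mu (vD qs s) Pz Hmu S3) as [E|E];
      change (vscale (/ lnorm (vD qs s)) (vD qs s)) with (hs s) in E;
      destruct (HMt s Hs) as [F|F]; rewrite F in E; rewrite E; auto.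
      rewrite vopp_vopp; auto. }
  split; intros s Hs; destruct (MAIN s Hs) as [M1 [M2 M3]]; split; simpl; auto.
Qed.
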